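(* For every odd integer $n\geq 3$ and every $i\in[1,7]$, there exists a $D_i$-decomposition of $K^*_{n\times 7}$.
   Context: For a simple graph $G$, $G^*$ is the digraph with vertex set $V(G)$ and arc set $\bigcup_{\{x,y\}\in E(G)}\{(x,y),(y,x)\}$. $K_{n\times 7}$ is the complete multipartite simple graph with $n$ parts each of size $7$, and $K^*_{n\times 7}=(K_{n\times 7})^*$. A $D$-decomposition of a digraph $K$ is a set of subdigraphs of $K$, each isomorphic to $D$, such that every arc of $K$ lies in exactly one of them. For distinct vertices $v_0,\dots,v_6$, the digraphs $D_i[v_0,v_1,\dots,v_6]$ ($i\in[1,7]$) all have vertex set $\{v_0,\dots,v_6\}$ and the following arc sets: $D_1$: $(v_1,v_0),(v_1,v_2),(v_2,v_3),(v_3,v_4),(v_4,v_5),(v_5,v_6),(v_6,v_0)$; $D_2$: $(v_1,v_0),(v_2,v_1),(v_2,v_3),(v_3,v_4),(v_4,v_5),(v_5,v_6),(v_6,v_0)$; $D_3$: $(v_1,v_0),(v_1,v_2),(v_3,v_2),(v_3,v_4),(v_4,v_5),(v_5,v_6),(v_6,v_0)$; $D_4$: $(v_1,v_0),(v_1,v_2),(v_2,v_3),(v_4,v_3),(v_4,v_5),(v_5,v_6),(v_6,v_0)$; $D_5$: $(v_1,v_0),(v_2,v_1),(v_3,v_2),(v_3,v_4),(v_4,v_5),(v_5,v_6),(v_6,v_0)$; $D_6$: $(v_1,v_0),(v_2,v_1),(v_2,v_3),(v_3,v_4),(v_5,v_4),(v_5,v_6),(v_6,v_0)$; $D_7$: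 $(v_1,v_0),(v_1,v_2),(v_3,v_2),(v_3,v_4),(v_4,v_5),(v_6,v_5),(v_6,v_0)$. $D_i$ also denotes the isomorphism type of $D_i[v_0,\dots,v_6]$. *)

(* Defs.v *)
From mathcomp Require Import all_boot.
Set Implicit Arguments. Unset Strict Implicit. Unset Printing Implicit Defensive.

Definition digraph (V : finType) : Type := ({set V} * {set V * V})%type.
Definition dverts (V : finType) (G : digraph V) : {set V} := G.1.
Definition darcs (V : finType) (G : digraph V) : {set V * V} := G.2.

Definition star (V : finType) (e : rel V) : digraph V :=
  ([set: V], [set a : V * V | e a.1 a.2 || e a.2 a.1]).

(* K_{n x 7}: vertices are (part, index) pairs; x ~ y iff in different parts. *)
Definition Kmult7 (n : nat) : rel ('I_n * 'I_7)%type := fun x y => x.1 != y.1.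
Definition Kstar7 (n : nat) : digraph ('I_n * 'I_7)%type := star (@Kmult7 n).

(* arc lists of D_1..D_7 on vertices v_0..v_6 (encoded by their indices) *)
Definition Darcs_nat (i : nat) : seq (nat * nat) :=
  match i with
  | 1 => [:: (1,0); (1,2); (2,3); (3,4); (4,5); (5,6); (6,0)]
  | 2 => [:: (1,0); (2,1); (2,3); (3,4); (4,5); (5,6); (6,0)]
  | 3 => [:: (1,0); (1,2); (3,2); (3,4); (4,5); (5,6); (6,0)]
  | 4 => [:: (1,0); (1,2); (2,3); (4,3); (4,5); (5,6); (6,0)]
  | 5 => [:: (1,0); (2,1); (3,2); (3,4); (4,5); (5,6); (6,0)]
  | 6 => [:: (1,0); (2,1); (2,3); (3,4); (5,4); (5,6); (6,0)]
  | 7 => [:: (1,0); (1,2); (3,2); (3,4); (4,5); (6,5); (6,0)]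
  | _ => [::]
  end.

Definition Ddig (i : nat) : digraph 'I_7 :=
  ([set: 'I_7], [set a : 'I_7 * 'I_7 | (val a.1, val a.2) \in Darcs_nat i]).

Definition disom (U V : finType) (G : digraph U) (H : digraph V) : Prop :=
  exists f : U -> V,
    {in dverts G &, injective f} /\
    f @: dverts G = dverts H /\
    [set (f a.1, f a.2) | a in darcs G] = darcs H.

Definition subdigraph (V : finType) (H K : digraph V) : Prop :=
  dverts H \subset dverts K /\ darcs H \subset darcs K /\
  {in darcs H, forall a, (a.1 \in dverts H) && (a.2 \in dverts H)}.

Definition decomposition (U V : finType) (D : digraph U) (K : digraph V)
    (P : {set digraph V}) : Prop :=
  (forall H, H \in P -> subdigraph H K /\ disom D H) /\
  (forall a, a \in darcs K -> #|[set H in P | a \in darcs H]| = 1).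

(* Main.v *)
Require Import Defs.
From mathcomp Require Import all_boot zify.
Set Implicit Arguments. Unset Strict Implicit. Unset Printing Implicit Defensive.

Lemma mod2 (a b n : nat) : a < n.*2 -> b < n.*2 -> a %% n = b %% n -> a = b \/ a = b + n \/ b = a + n.
Proof.
move=> ha hb; case: (ltnP a n) => Ha; case: (ltnP b n) => Hb.
- by rewrite !modn_small //; left.
- rewrite (modn_small Ha) -(subnK Hb) modnDr modn_small; lia.
- rewrite (modn_small Hb) -(subnK Ha) modnDr modn_small; lia.
- rewrite -(subnK Ha) -(subnK Hb) !modnDr !modn_small; lia.
Qed.
Definition cc (k : nat) := nth 0 [:: 0;1;2;0;1;0;1] k.
Definition ee (k : nat) := nth 0 [:: 0;1;3;3;2;5;3] k.
Definition edgen (x y : nat) := (y == x.+1 %% 7) || (x == y.+1 %% 7).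
Lemma cc_le x : cc x <= 2.
Proof. by do 7?case: x => [|x] //; rewrite /cc /= nth_nil. Qed.

Lemma core (m J J' g1 g1' g2 g2' x y x' y' : nat) :
  0 < J <= m -> 0 < J' <= m -> g1 < (2*m).+1 -> g1' < (2*m).+1 -> g2 < 7 -> g2' < 7 ->
  x < 7 -> y < 7 -> x' < 7 -> y' < 7 -> edgen x y -> edgen x' y' ->
  (g1 + cc x * J) %% (2*m).+1 = (g1' + cc x' * J') %% (2*m).+1 ->
  (g1 + cc y * J) %% (2*m).+1 = (g1' + cc y' * J') %% (2*m).+1 ->
  (g2 + ee x) %% 7 = (g2' + ee x') %% 7 ->
  (g2 + ee y) %% 7 = (g2' + ee y') %% 7 ->
  [/\ J = J', g1 = g1', g2 = g2', x = x' & y = y'].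
Proof.
move=> HJ HJ' h1 h1' h2 h2' hx hy hx' hy' ex ey E1 E2 E3 E4.
have cb := cc_le.
move/mod2: E1 => E1. move/mod2: E2 => E2.
have {}E1 := E1 ltac:(move: (cb x); nia) ltac:(move: (cb x'); nia).
have {}E2 := E2 ltac:(move: (cb y); nia) ltac:(move: (cb y'); nia).
clear cb.
move: hx hy hx' hy' ex ey E1 E2 E3 E4.
case: x => [|[|[|[|[|[|[|x]]]]]]] // _;
case: y => [|[|[|[|[|[|[|y]]]]]]] // _ //;
case: x' => [|[|[|[|[|[|[|x']]]]]]] // _;
case: y' => [|[|[|[|[|[|[|y']]]]]]] // _ // _ _; rewrite /cc /ee /= => *; split; lia.
Qed.

Lemma vinj (m J g1 g2 x y : nat) :
  0 < J <= m -> g1 < (2*m).+1 -> g2 < 7 -> x < 7 -> y < 7 ->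
  (g1 + cc x * J) %% (2*m).+1 = (g1 + cc y * J) %% (2*m).+1 ->
  (g2 + ee x) %% 7 = (g2 + ee y) %% 7 -> x = y.
Proof.
move=> HJ h1 h2 hx hy E1 E2.
have cb := cc_le.
move/mod2: E1 => E1.
have {}E1 := E1 ltac:(move: (cb x); nia) ltac:(move: (cb y); nia).
clear cb.
move: hx hy E1 E2.
case: x => [|[|[|[|[|[|[|x]]]]]]] // _;
case: y => [|[|[|[|[|[|[|y]]]]]]] // _; rewrite /cc /ee /= => *; lia.
Qed.

Lemma vpart (m J g1 x y : nat) :
  0 < J <= m -> g1 < (2*m).+1 -> x < 7 -> y < 7 -> edgen x y ->
  (g1 + cc x * J) %% (2*m).+1 != (g1 + cc y * J) %% (2*m).+1.
Proof.
move=> HJ h1 hx hy exy; apply/eqP => E1.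
have cb := cc_le.
move/mod2: E1 => E1.
have {}E1 := E1 ltac:(move: (cb x); nia) ltac:(move: (cb y); nia).
clear cb.
move: hx hy exy E1.
case: x => [|[|[|[|[|[|[|x]]]]]]] // _;
case: y => [|[|[|[|[|[|[|y]]]]]]] // _ //; rewrite /cc /ee /= => *; lia.
Qed.
Definition o7 (k : nat) : 'I_7 :=
  match k with 0 => @Ordinal 7 0 erefl | 1 => @Ordinal 7 1 erefl | 2 => @Ordinal 7 2 erefl
  | 3 => @Ordinal 7 3 erefl | 4 => @Ordinal 7 4 erefl | 5 => @Ordinal 7 5 erefl | _ => @Ordinal 7 6 erefl end.
Lemma o7K (x : 'I_7) : o7 x = x.
Proof. apply: val_inj; case: x => [[|[|[|[|[|[|[|k]]]]]]] Hk] //. Qed.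
Definition rr (i : nat) := nth 0 [:: 0;1;2;3;4;3;2;1] i.
Definition sig (i : nat) (x : 'I_7) : 'I_7 := o7 ((7 + rr i - x) %% 7).
Definition tau i (b : bool) x := if b then sig i x else x.
Definition inA i (x y : 'I_7) := (val x, val y) \in Darcs_nat i.
Definition ep (k : 'I_7) (o : bool) : 'I_7 * 'I_7 :=
  if o then (o7 (k.+1 %% 7), k) else (k, o7 (k.+1 %% 7)).
Definition A7 (P : 'I_7 -> bool) := all (fun k => P (o7 k)) (iota 0 7).
Definition AB (P : bool -> bool) := P false && P true.
Lemma A7P P : A7 P -> forall x, P x.
Proof. move=> /allP H x; rewrite -(o7K x); apply: H; by rewrite mem_iota /=. Qed.
Lemma ABP P : AB P -> forall x, P x.
Proof. by case/andP=> ? ? []. Qed.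
Definition E7 (P : 'I_7 -> bool) := has (fun k => P (o7 k)) (iota 0 7).
Lemma E7P P : E7 P -> exists x, P x.
Proof. by case/hasP=> k _ H; exists (o7 k). Qed.

Definition f1 i := AB (fun b => A7 (fun x => A7 (fun y => inA i x y ==> edgen (tau i b x) (tau i b y)))).
Definition f2 i := AB (fun b => AB (fun b' => A7 (fun x => A7 (fun y => A7 (fun x' => A7 (fun y' =>
  [&& inA i x y, inA i x' y', tau i b x == tau i b' x' & tau i b y == tau i b' y'] ==> (b == b'))))))).
Definition f3 i := A7 (fun x => A7 (fun y => edgen x y ==>
  (E7 (fun p1 => E7 (fun p2 => inA i p1 p2 && (p1 == x) && (p2 == y))) ||
   E7 (fun p1 => E7 (fun p2 => inA i p1 p2 && (sig i p1 == x) && (sig i p2 == y)))))).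
Definition f4 i := A7 (fun x => A7 (fun y => (sig i x == sig i y) ==> (x == y))).
Definition f5 := A7 (fun k => AB (fun o => edgen (ep k o).1 (ep k o).2)).
Definition f6 := A7 (fun k => AB (fun o => A7 (fun k' => AB (fun o' => (ep k o == ep k' o') ==> ((k == k') && (o == o')))))).

Lemma fin_okP i : 1 <= i <= 7 -> [&& f1 i, f2 i, f3 i & f4 i].
Proof. case: i => [|[|[|[|[|[|[|[|i]]]]]]]] // _; vm_compute; reflexivity. Qed.
Lemma f56 : f5 && f6.
Proof. vm_compute; reflexivity. Qed.

Section Fin.
Variable i : nat.
Hypothesis Hi : 1 <= i <= 7.

Lemma F1 b (x y : 'I_7) : inA i x y -> edgen (tau i b x) (tau i b y).
Proof.
case/and4P: (fin_okP Hi) => H _ _ _.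
rewrite /f1 in H; by move: (ABP H b) => /= /A7P/(_ x) /= /A7P/(_ y) /= /implyP; apply.
Qed.
Lemma F2 b b' (x y x' y' : 'I_7) : inA i x y -> inA i x' y' ->
  tau i b x = tau i b' x' -> tau i b y = tau i b' y' -> b = b'.
Proof.
case/and4P: (fin_okP Hi) => _ H _ _ h1 h2 e1 e2.
rewrite /f2 in H; move: (ABP H b) => /= /ABP/(_ b') /= /A7P/(_ x) /= /A7P/(_ y) /= /A7P/(_ x') /= /A7P/(_ y') /=.
by rewrite h1 h2 e1 e2 !eqxx /= => /eqP.
Qed.
Lemma F3 (x y : 'I_7) : edgen x y ->
  exists b x0 y0, [/\ inA i x0 y0, tau i b x0 = x & tau i b y0 = y].
Proof.
case/and4P: (fin_okP Hi) => _ _ H _ exy.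
rewrite /f3 in H; move: H => /A7P/(_ x) /= /A7P/(_ y) /=; rewrite exy /= => /orP [].
  move/E7P => [x0] /E7P [y0] /andP [/andP [h /eqP e1] /eqP e2].
  by exists false, x0, y0.
move/E7P => [x0] /E7P [y0] /andP [/andP [h /eqP e1] /eqP e2].
by exists true, x0, y0.
Qed.
Lemma F4 : injective (sig i).
Proof.
case/and4P: (fin_okP Hi) => _ _ _ H x y e.
rewrite /f4 in H; by move: H => /A7P/(_ x) /= /A7P/(_ y) /=; rewrite e eqxx => /eqP.
Qed.
End Fin.

Lemma F5 k o : edgen (ep k o).1 (ep k o).2.
Proof. case/andP: f56 => H _; rewrite /f5 in H; by move: H => /A7P/(_ k) /= /ABP/(_ o). Qed.
Lemma F6 k o k' o' : ep k o = ep k' o' -> k = k' /\ o = o'.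
Proof.
case/andP: f56 => _ H e; rewrite /f6 in H.
move: H => /A7P/(_ k) /= /ABP/(_ o) /= /A7P/(_ k') /= /ABP/(_ o') /=.
by rewrite e eqxx /= => /andP [/eqP -> /eqP ->].
Qed.

Section Main.
Variable m : nat.
Hypothesis m_gt0 : 0 < m.
Local Notation n := (2*m).+1.
Local Notation V := ('I_n * 'I_7)%type.

Definition Vx (J : nat) (g : V) (x : 'I_7) : V :=
  (inord ((g.1 + cc x * J) %% n), inord ((g.2 + ee x) %% 7)).

Arguments Vx : simpl never.

Lemma Vx1 J g x : val (Vx J g x).1 = (g.1 + cc x * J) %% n.
Proof. by rewrite /= inordK // ltn_pmod. Qed.
Lemma Vx2 J g x : val (Vx J g x).2 = (g.2 + ee x) %% 7.
Proof. by rewrite /= inordK // ltn_pmod. Qed.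

Lemma core_Vx J J' g g' (x y x' y' : 'I_7) : 0 < J <= m -> 0 < J' <= m ->
  edgen x y -> edgen x' y' -> Vx J g x = Vx J' g' x' -> Vx J g y = Vx J' g' y' ->
  [/\ J = J', g = g', x = x' & y = y'].
Proof.
move=> HJ HJ' exy exy' e1 e2.
have a1 : val (Vx J g x).1 = val (Vx J' g' x').1 by rewrite e1.
have a2 : val (Vx J g x).2 = val (Vx J' g' x').2 by rewrite e1.
have b1 : val (Vx J g y).1 = val (Vx J' g' y').1 by rewrite e2.
have b2 : val (Vx J g y).2 = val (Vx J' g' y').2 by rewrite e2.
rewrite !Vx1 in a1 b1; rewrite !Vx2 in a2 b2.
clear e1 e2; case: g g' a1 a2 b1 b2 => [g1 g2] [g1' g2'] /= a1 a2 b1 b2.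
have [] := core HJ HJ' (ltn_ord g1) (ltn_ord g1') (ltn_ord g2) (ltn_ord g2')
  (ltn_ord x) (ltn_ord y) (ltn_ord x') (ltn_ord y') exy exy' a1 b1 a2 b2.
move=> -> /val_inj -> /val_inj -> /val_inj -> /val_inj ->; by [].
Qed.

Lemma Vx_inj J g : 0 < J <= m -> injective (Vx J g).
Proof.
move=> HJ x y e.
have a1 : val (Vx J g x).1 = val (Vx J g y).1 by rewrite e.
have a2 : val (Vx J g x).2 = val (Vx J g y).2 by rewrite e.
rewrite !Vx1 in a1; rewrite !Vx2 in a2.
apply: val_inj; exact: vinj HJ (ltn_ord g.1) (ltn_ord g.2) (ltn_ord x) (ltn_ord y) a1 a2.
Qed.

Lemma Vx_part J g (x y : 'I_7) : 0 < J <= m -> edgen x y -> (Vx J g x).1 != (Vx J g y).1.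
Proof.
move=> HJ exy; apply/eqP => e.
have a1 : val (Vx J g x).1 = val (Vx J g y).1 by rewrite e.
rewrite !Vx1 in a1.
by move: (vpart HJ (ltn_ord g.1) (ltn_ord x) (ltn_ord y) exy); rewrite a1 eqxx.
Qed.

Lemma card_arcsK : #|darcs (Kstar7 n)| + n * 49 = (n * 7) * (n * 7).
Proof.
pose S0 := [set a : V * V | a.1.1 == a.2.1].
have -> : darcs (Kstar7 n) = ~: S0.
  apply/setP => a; rewrite !inE /Kmult7 /=; by case: eqP => //= ->; rewrite eqxx.
pose h := fun p : ('I_n * 'I_7) * 'I_7 => ((p.1.1, p.1.2), (p.1.1, p.2)) : V * V.
have hinj : injective h.
  move=> [[p x] y] [[p' x'] y'] [-> -> _ ->]; by [].
have -> : n * 49 = #|S0|.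
  have -> : S0 = h @: setT.
    apply/setP => [[[p x] [q y]]]; rewrite inE /=; apply/eqP/imsetP.
      by move=> <-; exists ((p, x), y).
    by move=> [[[p' x'] y'] _ [-> _ -> _]].
  rewrite card_imset //. rewrite cardsT. rewrite !card_prod. rewrite !card_ord. lia.
rewrite addnC cardsC !card_prod !card_ord; lia.
Qed.

Variable i : nat.
Hypothesis Hi : 1 <= i <= 7.

Definition copy (J : nat) (g : V) (b : bool) : digraph V :=
  ((fun x => Vx J g (tau i b x)) @: setT,
   [set ((fun x => Vx J g (tau i b x)) a.1, (fun x => Vx J g (tau i b x)) a.2) | a in darcs (Ddig i)]).

Definition PP : {set digraph V} :=
  [set copy (nat_of_ord p.1.1).+1 p.1.2 p.2 | p : ('I_m * V) * bool].

Lemma inDdig (a : 'I_7 * 'I_7) : (a \in darcs (Ddig i)) = inA i a.1 a.2.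
Proof. by rewrite /darcs /Ddig inE. Qed.

Definition Psi (q : ('I_m * V) * ('I_7 * bool)) : V * V :=
  (Vx (nat_of_ord q.1.1).+1 q.1.2 (ep q.2.1 q.2.2).1, Vx (nat_of_ord q.1.1).+1 q.1.2 (ep q.2.1 q.2.2).2).

Lemma JR (j : 'I_m) : 0 < (nat_of_ord j).+1 <= m.
Proof. by rewrite /= ltn_ord. Qed.

Lemma Psi_inj : injective Psi.
Proof.
move=> [[j g] [k o]] [[j' g'] [k' o']]; rewrite /Psi => E.
have e1 := congr1 fst E; have e2 := congr1 snd E; cbn [fst snd] in e1, e2.
have [eJ eg ex ey] := core_Vx (JR j) (JR j') (F5 k o) (F5 k' o') e1 e2.
have [ek eo] : k = k' /\ o = o'.
  apply: F6; rewrite [ep k o]surjective_pairing [ep k' o']surjective_pairing ex ey; by [].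
have ej : j = j' by apply: val_inj; case: eJ.
by rewrite ej eg ek eo.
Qed.

Lemma Psi_onto : Psi @: setT = darcs (Kstar7 n).
Proof.
apply/eqP; rewrite eqEcard; apply/andP; split.
  apply/subsetP => a /imsetP [q _ ->]; rewrite /darcs /= inE /Kmult7 /=.
  by rewrite Vx_part ?JR ?F5.
rewrite card_imset; last exact: Psi_inj.
have := card_arcsK; rewrite cardsT !card_prod !card_ord card_bool; move: #|darcs (Kstar7 n)| => c h; suff e : n * 7 * (n * 7) = n * 49 + m * (n * 7) * (7 * 2) by lia.
nia.
Qed.

Theorem main_dec : decomposition (Ddig i) (Kstar7 n) PP.
Proof.
split.
  move=> H /imsetP [[[j g] b] _ ->] /=; split.
    split; first by rewrite /dverts /= subsetT.
    split.
      apply/subsetP => a /imsetP [[x y] Hp ->]; rewrite /darcs /= inE /Kmult7 /=.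
      rewrite Vx_part ?JR //; apply: (F1 Hi b); by rewrite inDdig in Hp.
    move=> a /imsetP [p Hp ->] /=; apply/andP; split; apply: imset_f; exact: in_setT.
  exists (fun x => Vx (nat_of_ord j).+1 g (tau i b x)); split; last by split.
  move=> x y _ _ /(Vx_inj (JR j)); case: b => //=; apply: (F4 Hi).
move=> a; rewrite -Psi_onto => /imsetP [[[j g] [k o]] _ ->].
rewrite /Psi /=.
have := F5 k o; case E: (ep k o) => [x y] /= exy.
have [b [x0 [y0 [h0 ex ey]]]] := F3 Hi exy.
apply/eqP/cards1P; exists (copy (nat_of_ord j).+1 g b).
apply/setP => H; rewrite !inE; apply/andP/eqP.
  case=> /imsetP [[[j' g'] b'] _ ->] /imsetP [[x1 y1] Hin EE].
  have e1 := congr1 fst EE; have e2 := congr1 snd EE; cbn [fst snd] in e1, e2.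
  rewrite inDdig /= in Hin.
  have [eJ eg exx eyy] := core_Vx (JR j) (JR j') exy (F1 Hi b' Hin) e1 e2.
  have eb : b' = b by apply: (F2 Hi Hin h0); by rewrite ?ex ?ey ?exx ?eyy.
  have ej : j' = j by apply: val_inj; case: eJ.
  by rewrite ej eg eb.
move=> ->; split; first by apply/imsetP; exists ((j, g), b).
apply/imsetP; exists (x0, y0); first by rewrite inDdig.
by rewrite /= ex ey.
Qed.
End Main.

Theorem corollary1p7 (n i : nat) :
  odd n -> 3 <= n -> 1 <= i <= 7 ->
  exists P : {set digraph ('I_n * 'I_7)%type}, decomposition (Ddig i) (Kstar7 n) P.
Proof.
move=> Hodd H3 Hi.
have [m Hn] : exists m, n = (2 * m).+1.
  exists n./2; rewrite -{1}(odd_double_half n) Hodd -mul2n; by [].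
subst n.
have m_gt0 : 0 < m by lia.
exists (PP m i); exact: main_dec.
Qed.
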